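(* Let $(\mathbf X,\mathbf Y)$ be a general correlated source. There exists a sequence $\{\varepsilon_n\}_{n\ge1}$ with $\varepsilon_n\to0$ as $n\to\infty$ such that \[\overline H_s(\mathbf X|\mathbf Y)=\limsup_{n\to\infty}\frac1n\overline H_s^{\varepsilon_n}(X^n|Y^n);\] moreover, $\{\varepsilon_n\}$ can be chosen so that in addition $\frac1n\log\frac1{\varepsilon_n}\to0$.
   Context: A general correlated source $(\mathbf X,\mathbf Y)=\{(X^n,Y^n)\}_{n\ge1}$ is an arbitrary sequence of pairs of random variables on $\mathcal X^n\times\mathcal Y^n$, $\mathcal X,\mathcal Y$ finite or countably infinite (no structural assumptions; marginal probabilities positive). Logs base 2. For $x^n$ and $\varepsilon\in(0,1]$: $\overline h^\varepsilon(x^n)=\inf\{a\in\mathbb R:\sum_{y^n:\log(1/P_{X^n|Y^n}(x^n|y^n))>a}P_{Y^n|X^n}(y^n|x^n)\le\varepsilon\}$; $\overline H_s^\varepsilon(X^n|Y^n)=\sum_{x^n}P_{X^n}(x^n)\overline h^\varepsilon(x^n)$; $\overline H_s(\mathbf X|\mathbf Y)=\lim_{\varepsilon\downarrow0}\limsup_n\frac1n\overline H_s^\varepsilon(X^n|Y^n)$. *)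

(* Defs.v *)
From HB Require Import structures.
From mathcomp Require Import all_boot all_order all_algebra.
From mathcomp Require Import all_classical all_reals all_analysis.
Set Implicit Arguments. Unset Strict Implicit. Unset Printing Implicit Defensive.
Import Order.TTheory GRing.Theory Num.Theory.
Local Open Scope classical_set_scope.
Local Open Scope ring_scope.

Definition log2 {R : realType} (x : R) : R := ln x / ln 2.

Definition logInv {R : realType} (p : R) : \bar R :=
  if p == 0 then +oo%E else (- log2 p)%:E.

(* A general correlated source: for each n a joint pmf P n on X^n x Y^n,
   where X^n is represented by n-tuples over the countable alphabet X. *)
Definition source (R : realType) (X Y : countType) :=
  forall n : nat, n.-tuple X -> n.-tuple Y -> R.

Definition is_source {R : realType} {X Y : countType} (P : source R X Y) : Prop :=
  (forall n x y, 0 <= P n x y) /\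
  (forall n, (\esum_(p in [set: n.-tuple X * n.-tuple Y]) (P n p.1 p.2)%:E = 1)%E).

Definition PX {R : realType} {X Y : countType} (P : source R X Y) n (x : n.-tuple X) : R :=
  fine (\esum_(y in [set: n.-tuple Y]) (P n x y)%:E)%E.
Definition PY {R : realType} {X Y : countType} (P : source R X Y) n (y : n.-tuple Y) : R :=
  fine (\esum_(x in [set: n.-tuple X]) (P n x y)%:E)%E.

Definition positive_marginals {R : realType} {X Y : countType} (P : source R X Y) : Prop :=
  (forall n (x : n.-tuple X), 0 < PX P x) /\ (forall n (y : n.-tuple Y), 0 < PY P y).

Definition PXgY {R : realType} {X Y : countType} (P : source R X Y) n
  (x : n.-tuple X) (y : n.-tuple Y) : R := P n x y / PY P y.
Definition PYgX {R : realType} {X Y : countType} (P : source R X Y) n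
  (y : n.-tuple Y) (x : n.-tuple X) : R := P n x y / PX P x.

Definition hbar {R : realType} {X Y : countType} (P : source R X Y) (eps : R) n
  (x : n.-tuple X) : \bar R :=
  ereal_inf [set a%:E | a in
    [set a : R | (\esum_(y in [set y : n.-tuple Y | (a%:E < logInv (PXgY P x y))%E])
                    (PYgX P y x)%:E <= eps%:E)%E]].

Definition xsum {R : realType} {T : choiceType} (f : T -> \bar R) : \bar R :=
  (\esum_(t in [set: T]) maxe (f t) 0 - \esum_(t in [set: T]) maxe (- f t) 0)%E.

Definition Hs_eps {R : realType} {X Y : countType} (P : source R X Y) (eps : R) n : \bar R :=
  xsum (fun x : n.-tuple X => ((PX P x)%:E * hbar P eps x)%E).

Definition Hs_eps_rate {R : realType} {X Y : countType} (P : source R X Y) (eps : R) n : \bar R :=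
  ((n%:R^-1)%:E * Hs_eps P eps n)%E.

Definition Hs {R : realType} {X Y : countType} (P : source R X Y) : \bar R :=
  lim ((fun eps : R => limn_esup (Hs_eps_rate P eps)) x @[x --> 0^'+]).

(* Main.v *)
Require Import Defs.
From HB Require Import structures.
From mathcomp Require Import all_boot all_order all_algebra.
From mathcomp Require Import all_classical all_reals all_analysis.
From mathcomp Require Import ring lra.
Import Order.TTheory GRing.Theory Num.Theory.
Local Open Scope classical_set_scope.
Local Open Scope ring_scope.

Lemma esup_le_ev (R : realType) (a b : nat -> \bar R) N :
  (forall n, (N <= n)%N -> (a n <= b n)%E) -> (limn_esup a <= limn_esup b)%E.
Proof.
move=> ab; rewrite !limn_esup_lim; apply: lee_lim; [exact: is_cvg_esups|exact: is_cvg_esups|].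
exists N => // m /= Nm; apply: ge_ereal_sup => _ [k /= mk <-].
apply: le_trans (ab _ (leq_trans Nm mk)) _; apply: ereal_sup_ubound; by exists k.
Qed.

Lemma esup_lt_ev (R : realType) (a : nat -> \bar R) c :
  (limn_esup a < c)%E -> exists N, forall n, (N <= n)%N -> (a n < c)%E.
Proof.
rewrite limn_esup_lim => H.
have : ~ (forall N, (c <= esups a N)%E).
  move=> Hc; have : (c <= limn (esups a))%E.
    by apply: lime_ge; [exact: is_cvg_esups| exact: nearW].
  by rewrite leNgt H.
move=> /existsNP [N /negP]; rewrite -ltNge => HN.
exists N => n Nn; apply: le_lt_trans HN; apply: ereal_sup_ubound; by exists n.
Qed.

Lemma le_of_gt (R : realType) (x L : \bar R) :
  (forall r : R, (L < r%:E)%E -> (x <= r%:E)%E) -> (x <= L)%E.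
Proof.
case: L => [l| |] H.
- apply/lee_addgt0Pr => e e0; apply: H; by rewrite lte_fin ltrDl.
- exact: leey.
- case: x H => [r| |] H.
  + have := H (r - 1) (ltNye _); rewrite lee_fin => h; exfalso; clear H; lra.
  + by have := H 0 (ltNye _).
  + by [].
Qed.
Lemma rate_mono (R : realType) (X Y : countType) (P : source R X Y) n (e1 e2 : R) :
  (forall m (x : m.-tuple X), 0 <= PX P x) ->
  e1 <= e2 -> (Hs_eps_rate P e2 n <= Hs_eps_rate P e1 n)%E.
Proof.
move=> PX0 e12.
have hb : forall x : n.-tuple X, (hbar P e2 x <= hbar P e1 x)%E.
  move=> x; apply: ereal_inf_le_tmp => _ [a /= Ha <-]; exists a => //=.
  by apply: (le_trans Ha); rewrite lee_fin.
rewrite /Hs_eps_rate; apply: lee_wpmul2l; first by rewrite lee_fin invr_ge0.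
rewrite /Hs_eps /xsum; apply: leeB.
  apply: le_esum => x _; apply: le_max2 => //.
  by apply: lee_wpmul2l; [rewrite lee_fin|].
apply: le_esum => x _; apply: le_max2 => //.
by rewrite leeN2; apply: lee_wpmul2l; [rewrite lee_fin|].
Qed.

Lemma abs_main (R : realType) (g : R -> nat -> \bar R) :
  (forall n e1 e2, 0 < e1 -> e1 <= e2 -> (g e2 n <= g e1 n)%E) ->
  exists eps : nat -> R,
    (forall n, 0 < eps n <= 1) /\
    eps @ \oo --> 0 /\
    lim ((fun e : R => limn_esup (g e)) x @[x --> 0^'+]) = limn_esup (fun n => g (eps n) n) /\
    (fun n => n%:R^-1 * log2 (eps n)^-1) @ \oo --> 0.
Proof.
move=> gmono.
have fmono : forall e1 e2, 0 < e1 -> e1 <= e2 -> (limn_esup (g e2) <= limn_esup (g e1))%E.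
  by move=> e1 e2 e10 e12; apply: (@esup_le_ev _ _ _ 0) => n _; exact: gmono.
have [L [HL [fL Lub]]] : exists L,
    lim ((fun e : R => limn_esup (g e)) x @[x --> 0^'+]) = L /\
    (forall e, 0 < e <= 1 -> (limn_esup (g e) <= L)%E) /\
    (forall z, (forall e, 0 < e <= 1 -> (limn_esup (g e) <= z)%E) -> (L <= z)%E).
  eexists; split; [|split].
  - apply: cvg_lim => //; apply: (@nonincreasing_at_right_cvge _ _ _ (BRight 1)).
      by rewrite bnd_simp.
    move=> x y; rewrite !in_itv /= => /andP[x0 _] _ xy; exact: fmono.
  - move=> e He; apply: ereal_sup_ubound; exists e => //=; by rewrite in_itv.
  - move=> z Hz; apply: ge_ereal_sup => _ [e /= He <-]; apply: Hz; by move: He; rewrite in_itv.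
have finv : forall k : nat, 0 < (k.+1%:R : R)^-1 <= 1.
  by move=> k; rewrite invr_gt0 ltr0Sn invf_le1 ?ltr0Sn // ler1n.
pose c k : \bar R := match L with r%:E => (r + k.+1%:R^-1)%:E | +oo%E => +oo%E | -oo%E => (- k%:R)%:E end.
have exN : forall k, exists N, ((k.+1 ^ 2) <= N)%N /\
    forall n, (N <= n)%N -> (g (k.+1%:R^-1)%R n <= c k)%E.
  move=> k; have [Lp|Lp] : L = +oo%E \/ (limn_esup (g (k.+1%:R^-1)%R) < c k)%E.
    rewrite /c; move: (fL _ (finv k)); case: (L) => [l| |] fl; [right|left|right] => //.
    - by apply: le_lt_trans fl _; rewrite lte_fin ltrDl invr_gt0 ltr0Sn.
    - by move: fl; rewrite leeNy_eq => /eqP ->; rewrite ltNye.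
  - exists (k.+1 ^ 2)%N; split => // n _; rewrite /c Lp; exact: leey.
  - have [N HN] := @esup_lt_ev _ _ _ Lp; exists (maxn N (k.+1 ^ 2)); split; first exact: leq_maxr.
    move=> n; rewrite geq_max => /andP[Nn _]; exact/ltW/HN.
have [M HM] := choice exN.
pose K n := (\max_(k < n | (M k <= n)%N) k)%N.
pose eps n : R := ((K n).+1%:R)^-1.
have Kge : forall k n, (k < n)%N -> (M k <= n)%N -> (k <= K n)%N.
  move=> k n kn Mk.
  exact: (@leq_bigmax_cond _ (fun i : 'I_n => (M i <= n)%N) (fun i => nat_of_ord i) (Ordinal kn)).
have Kw : forall n, (0 < n)%N -> (M 0 <= n)%N ->
    exists k, (k < n)%N /\ (M k <= n)%N /\ K n = k.
  move=> n n0 M0.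
  have [|i Pi Ki] := @eq_bigmax_cond _ (fun i : 'I_n => (M i <= n)%N) (fun i => nat_of_ord i).
    by apply/card_gt0P; exists (Ordinal n0).
  exists i; split; first exact: ltn_ord.
  by split; [exact: Pi|exact: Ki].
have epsle : forall e, 0 < e -> exists N, forall n, (N <= n)%N -> eps n < e.
  move=> e e0; have [k0 Hk0] := ltr_add_invr e0.
  exists (maxn (M k0) k0.+1) => n; rewrite geq_max => /andP[Mn kn].
  apply: le_lt_trans Hk0; rewrite add0r /eps lef_pV2 ?posrE ?ltr0Sn // ler_nat ltnS.
  exact: Kge.
have epscvg : eps @ \oo --> 0.
  apply/cvgrPdist_lt => e e0; have [N HN] := epsle e e0.
  exists N => // n /= Nn; rewrite sub0r normrN ger0_norm; first exact: HN.
  by have /andP[/ltW] := finv (K n).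
exists eps; split; first by move=> n; exact: finv.
split; first exact: epscvg.
split.
  rewrite HL; apply/eqP; rewrite eq_le; apply/andP; split.
  - apply: Lub => e /andP[e0 e1]; have [N HN] := epsle e e0.
    apply: (@esup_le_ev _ _ _ N) => n Nn; apply: gmono; last exact/ltW/HN.
    by have /andP[] := finv (K n).
  - apply: le_of_gt => r Lr.
    have [k0 Hk0] : exists k0, forall k, (k0 <= k)%N -> (c k <= r%:E)%E.
      rewrite /c; move: Lr; case: (L) => [l| |] Lr.
      + rewrite lte_fin in Lr; have [k0 Hk0] := ltr_add_invr Lr; exists k0 => k kk.
        rewrite lee_fin; apply/ltW/(le_lt_trans _ Hk0).
        by rewrite lerD2l lef_pV2 ?posrE ?ltr0Sn // ler_nat ltnS.
      + by rewrite ltNge leey in Lr.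
      + exists (Num.Def.archi_bound `|r|) => k kk; rewrite lee_fin.
        have h1 := archi_boundP (normr_ge0 r).
        have h2 : ((Num.Def.archi_bound `|r|)%:R <= k%:R :> R) by rewrite ler_nat.
        have h3 : - r <= `|r| by rewrite -normrN ler_norm.
        lra.
    rewrite limn_esup_lim; apply: lime_le; first exact: is_cvg_esups.
    exists (maxn (maxn (M 0) 1) (maxn (M k0) k0.+1)) => // n /=.
    rewrite !geq_max => /andP[/andP[M0n n1] /andP[Mk0n k0n]].
    apply: ge_ereal_sup => _ [m /= nm <-].
    have [k [km [Mk Kk]]] := Kw m (leq_trans n1 nm) (leq_trans M0n nm).
    have k0k : (k0 <= k)%N.
      by rewrite -Kk; apply: Kge; [exact: leq_trans k0n nm| exact: leq_trans Mk0n nm].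
    apply: le_trans (Hk0 k k0k); rewrite /eps Kk; exact: (HM k).2 m Mk.
have Hup : (fun n => eps n * (ln (2:R))^-1) @ \oo --> 0.
  rewrite -[X in _ --> X](mul0r ((ln (2:R))^-1)); apply: cvgMr_tmp; exact: epscvg.
suff Hev : \forall n \near \oo, 0 <= n%:R^-1 * log2 (eps n)^-1 <= eps n * (ln (2:R))^-1.
  exact: (squeeze_cvgr Hev (cvg_cst 0) Hup).
exists (maxn (M 0) 1) => // n /=; rewrite geq_max => /andP[M0n n1].
have [k [kn [Mk Kk]]] := Kw n n1 M0n.
rewrite /eps Kk invrK.
have ln2 : 0 < ln (2:R) by apply: ln_gt0; rewrite ltr1n.
have hl : 0 <= ln (k.+1%:R : R) by apply: ln_ge0; rewrite ler1n.
have hlk : ln (k.+1%:R : R) <= k.+1%:R.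
  have -> : (k.+1%:R : R) = 1 + k%:R by rewrite -natr1 addrC.
  have hk := ler0n R k.
  apply: le_trans (le_ln1Dx _) _; lra.
have hn : ((k.+1%:R : R) ^+ 2 <= n%:R) by rewrite -natrX ler_nat; exact: leq_trans (HM k).1 Mk.
rewrite /log2; apply/andP; split.
  by apply: mulr_ge0; [rewrite invr_ge0| apply: divr_ge0; [|exact: ltW]].
move: hl hlk hn; set x := (k.+1%:R : R) => hl hlk hn.
have x0 : 0 < x by rewrite ltr0Sn.
have n0 : 0 < (n%:R : R) by apply: lt_le_trans hn; exact: exprn_gt0.
rewrite mulrA ler_wpM2r ?invr_ge0 ?(ltW ln2) //.
have hinv : n%:R^-1 <= (x ^+ 2)^-1 by rewrite lef_pV2 ?posrE ?exprn_gt0.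
apply: le_trans (ler_pM _ _ hinv hlk) _; [by rewrite invr_ge0 ltW| exact: hl |].
by rewrite expr2 invfM -mulrA mulVf ?mulr1 // gt_eqF.
Qed.

Theorem lemma5 (R : realType) (X Y : countType) (P : source R X Y) :
  is_source P -> positive_marginals P ->
  exists eps : nat -> R,
    (forall n, 0 < eps n <= 1) /\
    eps @ \oo --> 0 /\
    Hs P = limn_esup (fun n => Hs_eps_rate P (eps n) n) /\
    (fun n => n%:R^-1 * log2 (eps n)^-1) @ \oo --> 0.
Proof.
move=> _ [PXpos _].
have PX0 : forall m (x : m.-tuple X), 0 <= PX P x by move=> m x; exact/ltW/PXpos.
have [eps [H1 [H2 [H3 H4]]]] := @abs_main R (fun e n => Hs_eps_rate P e n)
  (fun n e1 e2 _ e12 => @rate_mono _ _ _ P n e1 e2 PX0 e12).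
exists eps; split; first exact: H1.
split; first exact: H2.
split; last exact: H4.
exact: H3.
Qed.
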